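(* Let $\lambda=2\cos(\pi/5)$, let $H_5$ be the subgroup of $SL(2,\mathbb R)$ generated by $S=\begin{pmatrix}0&1\\-1&0\end{pmatrix}$ and $T=\begin{pmatrix}1&\lambda\\0&1\end{pmatrix}$ (so $H_5\subseteq SL(2,\mathbb Z[\lambda])$), and let $A$ be a nonzero ideal of $\mathbb Z[\lambda]$. Then the natural reduction homomorphism $f: H_5\to SL(2,\mathbb Z[\lambda]/A)$ is surjective if and only if the absolute norm $N(A)=|\mathbb Z[\lambda]/A|$ is coprime to $6$.
   Context: $\lambda=2\cos(\pi/5)$ satisfies $\lambda^2=\lambda+1$; $\mathbb Z[\lambda]$ is the ring of integers of $\mathbb Q(\sqrt5)$. The map $f$ reduces each matrix entry modulo $A$. *)

(* Defs.v *)
From HB Require Import structures.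
From mathcomp Require Import all_boot all_order all_algebra.
From mathcomp Require Import reals trigo.
Set Implicit Arguments. Unset Strict Implicit. Unset Printing Implicit Defensive.
Import Order.TTheory GRing.Theory Num.Theory.
Local Open Scope ring_scope.

Section Defs.
Variable R : realType.

Definition lam : R := 2 * cos (pi / 5).

Definition inZl (x : R) : Prop := exists a b : int, x = a%:~R + b%:~R * lam.

Definition is_ideal (A : R -> Prop) : Prop :=
  [/\ forall x, A x -> inZl x,
      A 0,
      forall x y, A x -> A y -> A (x + y),
      forall x, A x -> A (- x)
    & forall r x, inZl r -> A x -> A (r * x)].

Definition nonzero_ideal (A : R -> Prop) : Prop := exists x, A x /\ x != 0.

Definition congr_mod (A : R -> Prop) (x y : R) : Prop := A (x - y).

(* N(A) = n : s is a complete system of n pairwise incongruent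
   representatives of Z[lambda]/A, i.e. |Z[lambda]/A| = n *)
Definition abs_norm_is (A : R -> Prop) (n : nat) : Prop :=
  exists s : seq R,
    [/\ size s = n,
        forall i, (i < n)%N -> inZl s`_i,
        forall i j, (i < n)%N -> (j < n)%N -> i != j -> ~ congr_mod A s`_i s`_j
      & forall x, inZl x -> exists2 i, (i < n)%N & congr_mod A x s`_i].

Definition Smx : 'M[R]_2 :=
  \matrix_(i, j) (if ((i : nat) == 0%N) && ((j : nat) == 1%N) then 1
                  else if ((i : nat) == 1%N) && ((j : nat) == 0%N) then -1
                  else 0).

Definition Tmx : 'M[R]_2 :=
  \matrix_(i, j) (if i == j then 1
                  else if ((i : nat) == 0%N) && ((j : nat) == 1%N) then lam
                  else 0).

Inductive H5 : 'M[R]_2 -> Prop :=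
  | H5_S : H5 Smx
  | H5_T : H5 Tmx
  | H5_mul : forall a b, H5 a -> H5 b -> H5 (a *m b)
  | H5_inv : forall a, H5 a -> H5 (invmx a).

(* the reduction map H_5 -> SL(2, Z[lambda]/A) is surjective: every matrix
   over Z[lambda] whose determinant is 1 mod A (i.e. every lift of an element
   of SL(2, Z[lambda]/A)) is entrywise congruent mod A to an element of H_5 *)
Definition reduction_surjective (A : R -> Prop) : Prop :=
  forall M : 'M[R]_2,
    (forall i j, inZl (M i j)) -> congr_mod A (\det M) 1 ->
    exists2 h, H5 h & forall i j, congr_mod A (h i j) (M i j).

End Defs.

(* Main.v *)
Require Import Defs.
From HB Require Import structures.
From mathcomp Require Import all_boot all_order all_algebra.
From mathcomp Require Import reals trigo.
From mathcomp Require Import ring lra zify.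
Import Order.TTheory GRing.Theory Num.Theory.
Local Open Scope ring_scope.

Definition Nz (x y : int) : int := x * x + x * y - y * y.

Lemma round (x M : int) : 0 < M -> exists g, `|2 * (x - g * M)| <= M.
Proof.
move=> hM; exists ((2 * x + M) %/ (2 * M))%Z.
have h2 : (2 * M) != 0 by lia.
have e := divz_eq (2 * x + M) (2 * M).
have r0 := modz_ge0 (2 * x + M) h2.
have r1 := ltz_pmod (2 * x + M) (ltac:(lia) : 0 < 2 * M).
set g := ((2 * x + M) %/ (2 * M))%Z in e *.
set m := ((2 * x + M) %% (2 * M))%Z in e r0 r1 *.
have : 2 * (x - g * M) = m - M by lia.
move=> ->; lia.
Qed.

Lemma euclid_step (a1 a2 c1 c2 : int) : Nz c1 c2 != 0 ->
  exists q1 q2, `|Nz (a1 - (q1 * c1 + q2 * c2)) (a2 - (q1 * c2 + q2 * c1 + q2 * c2))|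
     < `|Nz c1 c2|.
Proof.
move=> hN.
set u1 := a1 * c1 + a1 * c2 - a2 * c2.
set u2 := a2 * c1 - a1 * c2.
set M : int := `|Nz c1 c2|.
have hM : 0 < M by rewrite /M normr_gt0.
have [g1 h1] := round u1 M hM.
have [g2 h2] := round u2 M hM.
have [q1 [q2 [e1 e2]]] : exists q1 q2, q1 * Nz c1 c2 = g1 * M /\ q2 * Nz c1 c2 = g2 * M.
  case: (ltrP 0 (Nz c1 c2)) => hs.
    by exists g1, g2; rewrite /M gtr0_norm.
  by exists (- g1), (- g2); rewrite /M ler0_norm //; split; ring.
exists q1, q2.
set r1 := a1 - (q1 * c1 + q2 * c2).
set r2 := a2 - (q1 * c2 + q2 * c1 + q2 * c2).
have key : Nz r1 r2 * Nz c1 c2 = Nz (u1 - q1 * Nz c1 c2) (u2 - q2 * Nz c1 c2).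
  by rewrite /Nz /r1 /r2 /u1 /u2; ring.
rewrite e1 e2 in key.
set e1' := u1 - g1 * M in h1 key; set e2' := u2 - g2 * M in h2 key.
have hMe : M = `|Nz c1 c2| by [].
clearbody u1 u2 M r1 r2 e1' e2'.
have hb : `|Nz e1' e2'| * 2 <= M * M.
  have b1 : -M <= 2 * e1' <= M by lia.
  have b2 : -M <= 2 * e2' <= M by lia.
  have p1 : 0 <= (M - 2 * e1') * (M + 2 * e1') by apply: mulr_ge0; lia.
  have p2 : 0 <= (M - 2 * e2') * (M + 2 * e2') by apply: mulr_ge0; lia.
  have p3 : 0 <= (M - 2 * e1') * (M - 2 * e2') by apply: mulr_ge0; lia.
  have p4 : 0 <= (M + 2 * e1') * (M + 2 * e2') by apply: mulr_ge0; lia.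
  have p5 : 0 <= (M - 2 * e1') * (M + 2 * e2') by apply: mulr_ge0; lia.
  have p6 : 0 <= (M + 2 * e1') * (M - 2 * e2') by apply: mulr_ge0; lia.
  rewrite /Nz; lia.
have hk : `|Nz r1 r2| * M = `|Nz e1' e2'| by rewrite hMe -normrM key.
have : `|Nz r1 r2| * M * 2 <= M * M by rewrite hk.
case: (ltrP `|Nz r1 r2| M) => // hge h.
have := mulr_ge0 ((ltac:(rewrite subr_ge0; exact: hge) : 0 <= `|Nz r1 r2| - M)) (ltW hM).
have := mulr_gt0 hM hM. lia.
Qed.

Definition zp := (int * int)%type.
Definition pm (x y : zp) : zp := (x.1 * y.1 + x.2 * y.2, x.1 * y.2 + x.2 * y.1 + x.2 * y.2).
Definition pa (x y : zp) : zp := (x.1 + y.1, x.2 + y.2).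
Definition pn (x : zp) : zp := (- x.1, - x.2).
Definition M4 := (zp * zp * zp * zp)%type.
Definition mm (X Y : M4) : M4 :=
  let: (a, b, c, d) := X in let: (a', b', c', d') := Y in
  (pa (pm a a') (pm b c'), pa (pm a b') (pm b d'), pa (pm c a') (pm d c'), pa (pm c b') (pm d d')).
Definition madj (X : M4) : M4 := let: (a, b, c, d) := X in (d, pn b, pn c, a).
Definition rp (p : int) (x : zp) : zp := ((x.1 %% p)%Z, (x.2 %% p)%Z).
Definition rM (p : int) (X : M4) : M4 := let: (a, b, c, d) := X in (rp p a, rp p b, rp p c, rp p d).
Definition S4 : M4 := ((0, 0), (1, 0), (-1, 0), (0, 0)).
Definition T4 : M4 := ((1, 0), (0, 1), (0, 0), (1, 0)).
Definition I4 : M4 := ((1, 0), (0, 0), (0, 0), (1, 0)).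
Definition E4 : M4 := ((1, 0), (1, 0), (0, 0), (1, 0)).

Fixpoint close (p : int) (k : nat) (L : seq M4) : seq M4 :=
  if k is k'.+1 then
    let L' := undup (L ++ [seq rM p (mm x g) | x <- L, g <- [:: S4; T4]]) in
    if size L' == size L then L else close p k' L'
  else L.

Definition Dset (p : int) := close p 40 [:: rM p I4].
Arguments close : simpl never.
Arguments Dset : simpl never.

Definition ck1 p (D : seq M4) := all (fun x => all (fun y => rM p (mm x y) \in D) D) D.
Definition ck2 p (D : seq M4) := all (fun x => rM p (madj x) \in D) D.
Definition ck3 p (D : seq M4) := rM p S4 \in D.
Definition ck4 p (D : seq M4) := rM p T4 \in D.
Definition ck5 p (D : seq M4) := all (fun x => rM p x == x) D.
Definition ck6 p (D : seq M4) := rM p E4 \notin D.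
Definition checkD (p : int) D : Prop := [/\ ck1 p D, ck2 p D, ck3 p D, ck4 p D & (ck5 p D /\ ck6 p D)].

Definition cz (p x y : int) := (p %| x - y)%Z.
Definition cp p (x y : zp) := cz p x.1 y.1 /\ cz p x.2 y.2.
Definition cM p (X Y : M4) := let: (a, b, c, d) := X in let: (a', b', c', d') := Y in
  [/\ cp p a a', cp p b b', cp p c c' & cp p d d'].

Lemma cz_refl p x : cz p x x. Proof. by rewrite /cz subrr dvdz0. Qed.
Lemma cz_sym p x y : cz p x y -> cz p y x.
Proof. by rewrite /cz => /dvdzP [k e]; apply/dvdzP; exists (- k); rewrite mulNr -e; ring. Qed.
Arguments cz_sym {p x y}.
Lemma cz_trans p x y z : cz p x y -> cz p y z -> cz p x z.
Proof.
rewrite /cz => /dvdzP [k1 e1] /dvdzP [k2 e2]; apply/dvdzP; exists (k1 + k2).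
by rewrite mulrDl -e1 -e2; ring.
Qed.
Arguments cz_trans {p x y z}.
Lemma cz_add p x y x' y' : cz p x x' -> cz p y y' -> cz p (x + y) (x' + y').
Proof.
rewrite /cz => /dvdzP [k1 e1] /dvdzP [k2 e2]; apply/dvdzP; exists (k1 + k2).
by rewrite mulrDl -e1 -e2; ring.
Qed.
Arguments cz_add {p x y x' y'}.
Lemma cz_opp p x x' : cz p x x' -> cz p (- x) (- x').
Proof. by move=> h; apply: cz_sym; rewrite /cz; have -> : - x' - - x = x - x' by ring. Qed.
Arguments cz_opp {p x x'}.
Lemma cz_mul p x y x' y' : cz p x x' -> cz p y y' -> cz p (x * y) (x' * y').
Proof.
rewrite /cz => /dvdzP [k1 e1] /dvdzP [k2 e2]; apply/dvdzP; exists (x * k2 + k1 * y').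
have -> : x * y - x' * y' = x * (y - y') + (x - x') * y' by ring.
by rewrite e1 e2; ring.
Qed.
Arguments cz_mul {p x y x' y'}.
Lemma cz_mod p x : cz p x (x %% p)%Z.
Proof. by rewrite /cz; apply/dvdzP; exists (x %/ p)%Z; rewrite {1}(divz_eq x p); ring. Qed.
Lemma cz_modE p x y : cz p x y -> (x %% p = y %% p)%Z.
Proof. by rewrite /cz -eqz_mod_dvd => /eqP. Qed.
Arguments cz_modE {p x y}.

Lemma cp_pm p x y x' y' : cp p x x' -> cp p y y' -> cp p (pm x y) (pm x' y').
Proof.
case: x x' y y' => [x1 x2] [x1' x2'] [y1 y2] [y1' y2'] [/= h1 h2] [/= h3 h4].
by split => /=; repeat (apply: cz_add || apply: cz_mul).
Qed.
Arguments cp_pm {p x y x' y'}.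
Lemma cp_pa p x y x' y' : cp p x x' -> cp p y y' -> cp p (pa x y) (pa x' y').
Proof.
case: x x' y y' => [x1 x2] [x1' x2'] [y1 y2] [y1' y2'] [/= h1 h2] [/= h3 h4].
by split => /=; apply: cz_add.
Qed.
Arguments cp_pa {p x y x' y'}.
Lemma cp_pn p x x' : cp p x x' -> cp p (pn x) (pn x').
Proof. by case: x x' => [x1 x2] [x1' x2'] [/= h1 h2]; split => /=; apply: cz_opp. Qed.
Arguments cp_pn {p x x'}.
Lemma cp_sym p x y : cp p x y -> cp p y x.
Proof. by case=> h1 h2; split; apply: cz_sym. Qed.
Arguments cp_sym {p x y}.
Lemma cp_trans p x y z : cp p x y -> cp p y z -> cp p x z.
Proof. by case=> h1 h2 [h3 h4]; split; apply: cz_trans; eauto. Qed.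
Arguments cp_trans {p x y z}.

Lemma cM_mm p X Y X' Y' : cM p X X' -> cM p Y Y' -> cM p (mm X Y) (mm X' Y').
Proof.
case: X => [[[a b] c] d]; case: X' => [[[a' b'] c'] d'].
case: Y => [[[e f] g] h]; case: Y' => [[[e' f'] g'] h'].
by case=> h1 h2 h3 h4 [h5 h6 h7 h8]; split; apply: cp_pa; apply: cp_pm.
Qed.
Arguments cM_mm {p X Y X' Y'}.
Lemma cM_adj p X X' : cM p X X' -> cM p (madj X) (madj X').
Proof.
case: X => [[[a b] c] d]; case: X' => [[[a' b'] c'] d'].
by case=> h1 h2 h3 h4; split => //; apply: cp_pn.
Qed.
Arguments cM_adj {p X X'}.
Lemma cM_r p X : cM p X (rM p X).
Proof.
by case: X => [[[a b] c] d]; split; split; apply: cz_mod.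
Qed.
Lemma cM_trans p X Y Z : cM p X Y -> cM p Y Z -> cM p X Z.
Proof.
case: X => [[[a b] c] d]; case: Y => [[[a' b'] c'] d']; case: Z => [[[e f] g] h].
by case=> h1 h2 h3 h4 [h5 h6 h7 h8]; split; apply: cp_trans; eauto.
Qed.
Arguments cM_trans {p X Y Z}.
Lemma cM_sym p X Y : cM p X Y -> cM p Y X.
Proof.
case: X => [[[a b] c] d]; case: Y => [[[a' b'] c'] d'].
by case=> h1 h2 h3 h4; split; apply: cp_sym.
Qed.
Arguments cM_sym {p X Y}.
Lemma cM_rE p X Y : cM p X Y -> rM p X = rM p Y.
Proof.
case: X => [[[a b] c] d]; case: Y => [[[a' b'] c'] d'].
case=> [[e1 e2] [e3 e4] [e5 e6] [e7 e8]] /=; rewrite /rp.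
by rewrite (cz_modE e1) (cz_modE e2) (cz_modE e3) (cz_modE e4) (cz_modE e5)
  (cz_modE e6) (cz_modE e7) (cz_modE e8).
Qed.
Arguments cM_rE {p X Y}.

Lemma Nz_cz p x y x' y' : cz p x x' -> cz p y y' -> cz p (Nz x y) (Nz x' y').
Proof.
move=> h1 h2; rewrite /Nz; apply: cz_add; first by apply: cz_add; apply: cz_mul.
by apply: cz_opp; apply: cz_mul.
Qed.

Arguments Nz_cz {p x y x' y'}.

Lemma Nz_div p x y : (p = 2 \/ p = 3) -> (p %| Nz x y)%Z -> (p %| x)%Z /\ (p %| y)%Z.
Proof.
move=> hp hN.
have hp0 : p != 0 by case: hp => ->.
have hpp : 0 < p by case: hp => ->.
have h1 := cz_mod p x; have h2 := cz_mod p y.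
have := Nz_cz h1 h2; rewrite /cz => hd.
have hN' : (p %| Nz (x %% p)%Z (y %% p)%Z)%Z.
  have -> : Nz (x %% p)%Z (y %% p)%Z = Nz x y - (Nz x y - Nz (x %% p)%Z (y %% p)%Z) by ring.
  by apply: rpredB.
have r0 := modz_ge0 x hp0; have r1 := ltz_pmod x hpp.
have s0 := modz_ge0 y hp0; have s1 := ltz_pmod y hpp.
suff [ex ey] : (x %% p = 0 /\ y %% p = 0)%Z.
  split.
  - by move: (cz_sym h1); rewrite /cz ex sub0r rpredN.
  - by move: (cz_sym h2); rewrite /cz ey sub0r rpredN.
move: hN' r0 r1 s0 s1.
case: hp => ->; set r := (x %% _)%Z; set s := (y %% _)%Z; move=> hN' r0 r1 s0 s1.
- have hr : r = 0 \/ r = 1 by lia.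
  have hs : s = 0 \/ s = 1 by lia.
  move: hN'; case: hr => ->; case: hs => ->; vm_compute; move=> H; (discriminate || (split; reflexivity)).
- have hr : r = 0 \/ r = 1 \/ r = 2 by lia.
  have hs : s = 0 \/ s = 1 \/ s = 2 by lia.
  move: hN'; case: hr => [->|[->|->]]; case: hs => [->|[->|->]]; vm_compute; move=> H; (discriminate || (split; reflexivity)).
Qed.

Section M.
Variable R : realType.

Definition mk (a b c d : R) : 'M[R]_2 :=
  \matrix_(i < 2, j < 2) (if (i : nat) == 0%N then (if (j : nat) == 0%N then a else b)
                          else (if (j : nat) == 0%N then c else d)).

Lemma mkE (M : 'M[R]_2) : M = mk (M 0 0) (M 0 1) (M 1 0) (M 1 1).
Proof.
apply/matrixP => i j; rewrite /mk mxE.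
by case: i => [[|[|i]] hi]; case: j => [[|[|j]] hj] //=; congr (M _ _); apply: val_inj.
Qed.

Lemma mk00 a b c d : mk a b c d 0 0 = a. Proof. by rewrite mxE. Qed.
Lemma mk01 a b c d : mk a b c d 0 1 = b. Proof. by rewrite mxE. Qed.
Lemma mk10 a b c d : mk a b c d 1 0 = c. Proof. by rewrite mxE. Qed.
Lemma mk11 a b c d : mk a b c d 1 1 = d. Proof. by rewrite mxE. Qed.

Lemma mk_all (P : R -> Prop) a b c d : P a -> P b -> P c -> P d ->
  forall i j, P (mk a b c d i j).
Proof.
move=> ha hb hc hd i j; rewrite mxE.
by case: i => [[|[|i]] hi]; case: j => [[|[|j]] hj].
Qed.

Lemma mk_diff (P : R -> Prop) a b c d a' b' c' d' :
  P (a - a') -> P (b - b') -> P (c - c') -> P (d - d') ->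
  forall i j, P (mk a b c d i j - mk a' b' c' d' i j).
Proof.
move=> ha hb hc hd i j; rewrite !mxE.
by case: i => [[|[|i]] hi]; case: j => [[|[|j]] hj].
Qed.

Lemma mk_eq a b c d a' b' c' d' : a = a' -> b = b' -> c = c' -> d = d' ->
  mk a b c d = mk a' b' c' d'.
Proof. by move=> -> -> -> ->. Qed.

Lemma mk_mul a b c d a' b' c' d' :
  mk a b c d *m mk a' b' c' d' =
  mk (a * a' + b * c') (a * b' + b * d') (c * a' + d * c') (c * b' + d * d').
Proof.
apply/matrixP => i j; rewrite !mxE !big_ord_recr big_ord0 /= add0r !mxE.
by case: i => [[|[|i]] hi]; case: j => [[|[|j]] hj].
Qed.

Lemma det_mk a b c d : \det (mk a b c d) = a * d - b * c.
Proof.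
rewrite (expand_det_row _ 0) !big_ord_recr big_ord0 /= add0r.
rewrite /cofactor !det_mx11 !mxE /=.
rewrite !expr0 !expr1; ring.
Qed.

Lemma invmx_mk a b c d : a * d - b * c = 1 ->
  invmx (mk a b c d) = mk d (-b) (-c) a.
Proof.
move=> h.
have hu : mk a b c d \in unitmx by rewrite unitmxE det_mk h unitr1.
have e : mk a b c d *m mk d (-b) (-c) a = 1%:M.
  rewrite mk_mul [RHS]mkE !mxE /=; apply: mk_eq; rewrite -?h; ring.
by rewrite -[LHS]mulmx1 -e mulmxA mulVmx // mul1mx.
Qed.

Lemma one_mk : (1%:M : 'M[R]_2) = mk 1 0 0 1.
Proof. by rewrite [LHS]mkE !mxE. Qed.



Lemma lam2 : lam R * lam R = lam R + 1.
Proof.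
rewrite /lam.
set x := pi / 5 : R.
have hpi : (0 : R) < pi := pi_gt0 R.
have h3 : x *+ 3 = pi - x *+ 2.
  by rewrite /x; field.
have c3 : cos (x *+ 3) = - cos (x *+ 2).
  by rewrite h3 cosB cospi sinpi; ring.
have e2 : x *+ 2 = x + x by rewrite mulr2n.
have e3 : x *+ 3 = x *+ 2 + x by rewrite mulrSr.
have := c3; rewrite e3 cosD e2 cosD sinD => e.
have s2 := cos2sin2 x.
have cp : 0 < cos x.
  apply: cos_gt0_pihalf; apply/andP; split; rewrite /x; lra.
set c := cos x in e s2 cp *; set s := sin x in e s2 *.
have k : (c + 1) * (4 * c ^+ 2 - 2 * c - 1) = 0.
  have e' : (c * c - s * s) * c - (s * c + c * s) * s + (c * c - s * s) = 0.
    by rewrite e; ring.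
  have s2' : s ^+ 2 + c ^+ 2 - 1 = 0 by rewrite s2; ring.
  have -> : (c + 1) * (4 * c ^+ 2 - 2 * c - 1) =
    ((c * c - s * s) * c - (s * c + c * s) * s + (c * c - s * s))
     + (3 * c + 1) * (s ^+ 2 + c ^+ 2 - 1) by ring.
  by rewrite e' s2'; ring.
move/eqP: k; rewrite mulf_eq0 => /orP [/eqP h|/eqP h]; first lra.
apply/eqP; rewrite -subr_eq0; apply/eqP; rewrite -h; ring.
Qed.

Local Notation l := (lam R).

Lemma lamrel : l * l - l - 1 = 0.
Proof. by rewrite lam2; ring. Qed.

Lemma inZl_int (k : int) : inZl (k%:~R : R).
Proof. by exists k, 0; rewrite mul0r addr0. Qed.
Lemma inZl_nat (k : nat) : inZl (k%:R : R).
Proof. by exists k, 0; rewrite mul0r addr0. Qed.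
Lemma inZl_0 : inZl (0 : R). Proof. exact: (inZl_nat 0). Qed.
Lemma inZl_1 : inZl (1 : R). Proof. exact: (inZl_nat 1). Qed.
Lemma inZl_lam : inZl l.
Proof. by exists 0, 1; rewrite mul1r add0r. Qed.
Lemma inZl_add {x y : R} : inZl x -> inZl y -> inZl (x + y).
Proof.
move=> [a [b ->]] [c [d ->]]; exists (a + c), (b + d).
rewrite !rmorphD /=; ring.
Qed.
Lemma inZl_opp {x : R} : inZl x -> inZl (- x).
Proof.
move=> [a [b ->]]; exists (- a), (- b).
rewrite !rmorphN /=; ring.
Qed.
Lemma inZl_mul {x y : R} : inZl x -> inZl y -> inZl (x * y).
Proof.
move=> [a [b ->]] [c [d ->]]; exists (a * c + b * d), (a * d + b * c + b * d).
rewrite !rmorphD !rmorphM /=.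
have -> : (a%:~R + b%:~R * l) * (c%:~R + d%:~R * l) =
  (a%:~R * c%:~R + b%:~R * d%:~R) + (a%:~R * d%:~R + b%:~R * c%:~R + b%:~R * d%:~R) * l
  + (b%:~R * d%:~R) * (l * l - l - 1) :> R by ring.
by rewrite lamrel mulr0 addr0.
Qed.

Ltac zl_tac := repeat first
  [ assumption | apply: inZl_lam | apply: inZl_0 | apply: inZl_1
  | apply: inZl_add | apply: inZl_opp | apply: inZl_mul | apply: inZl_int
  | apply: inZl_nat ].

Lemma norm0_aux (k : nat) : forall x y : int, (absz x + absz y <= k)%N ->
  x * x + x * y - y * y = 0 -> x = 0 /\ y = 0.
Proof.
elim: k => [|k IH] x y hk e; first by lia.
have [a ha] : exists a, x = 2 * a \/ x = 2 * a + 1.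
  exists (x %/ 2)%Z; have := divz_eq x 2; have := modz_ge0 x (isT : 2 != 0 :> int);
  have := ltz_pmod x (isT : 0 < 2 :> int); lia.
have [b hb] : exists b, y = 2 * b \/ y = 2 * b + 1.
  exists (y %/ 2)%Z; have := divz_eq y 2; have := modz_ge0 y (isT : 2 != 0 :> int);
  have := ltz_pmod y (isT : 0 < 2 :> int); lia.
case: ha => ha; case: hb => hb; subst x y.
- have e' : a * a + a * b - b * b = 0.
    have : 4 * (a * a + a * b - b * b) = 0 by rewrite -e; ring.
    lia.
  case: (boolP ((a == 0) && (b == 0))) => [/andP [/eqP -> /eqP ->]|nz]; first by split; ring.
  have [h1 h2] := IH a b (ltac:(lia)) e'. lia.
- have : (2 * a) * (2 * a) + (2 * a) * (2 * b + 1) - (2 * b + 1) * (2 * b + 1)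
     = 2 * (2*a*a + 2*a*b + a - 2*b*b - 2*b - 1) + 1 by ring.
  lia.
- have : (2 * a + 1) * (2 * a + 1) + (2 * a + 1) * (2 * b) - (2 * b) * (2 * b)
     = 2 * (2*a*a + 2*a + 2*a*b + b - 2*b*b) + 1 by ring.
  lia.
- have : (2 * a + 1) * (2 * a + 1) + (2 * a + 1) * (2 * b + 1) - (2 * b + 1) * (2 * b + 1)
     = 2 * (2*a*a + 3*a + 2*a*b - b - 2*b*b) + 1 by ring.
  lia.
Qed.

Lemma norm0 (x y : int) : x * x + x * y - y * y = 0 -> x = 0 /\ y = 0.
Proof. exact: (@norm0_aux (absz x + absz y)). Qed.

Lemma indep (a b : int) : a%:~R + b%:~R * l = 0 :> R -> a = 0 /\ b = 0.
Proof.
move=> h; apply: norm0.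
have : (a%:~R + b%:~R * l) * ((a + b)%:~R - b%:~R * l) = (a * a + a * b - b * b)%:~R :> R.
  rewrite !rmorphD !rmorphM /=.
  have -> : (a%:~R + b%:~R * l) * (a%:~R + b%:~R - b%:~R * l) =
     a%:~R * a%:~R + a%:~R * b%:~R - b%:~R * b%:~R - (b%:~R * b%:~R) * (l * l - l - 1) :> R by ring.
  by rewrite lamrel mulr0 subr0 rmorphN /= rmorphM.
rewrite h mul0r => /esym/eqP; rewrite intr_eq0 => /eqP //.
Qed.

Lemma indep2 (a b c d : int) : a%:~R + b%:~R * l = c%:~R + d%:~R * l :> R -> a = c /\ b = d.
Proof.
move=> h; have [] := @indep (a - c) (b - d).
  by rewrite !rmorphB /= -[RHS](subrr (c%:~R + d%:~R * l)) -{1}h; ring.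
move=> h1 h2; split; lia.
Qed.

Lemma Smx_mk : Smx R = mk 0 1 (-1) 0.
Proof. by rewrite [LHS]mkE !mxE. Qed.
Lemma Tmx_mk : Tmx R = mk 1 l 0 1.
Proof. by rewrite [LHS]mkE !mxE. Qed.

Lemma H5_prop (h : 'M[R]_2) : H5 h -> (forall i j, inZl (h i j)) /\ \det h = 1.
Proof.
elim => [||a b _ [ea da] _ [eb db]|a _ [ea da]].
- rewrite Smx_mk det_mk; split; [apply: mk_all; zl_tac | ring].
- rewrite Tmx_mk det_mk; split; [apply: mk_all; zl_tac | ring].
- split; last by rewrite det_mulmx da db mulr1.
  move: (ea 0 0) (ea 0 1) (ea 1 0) (ea 1 1) (eb 0 0) (eb 0 1) (eb 1 0) (eb 1 1) => *.
  rewrite (mkE a) (mkE b) mk_mul; apply: mk_all; zl_tac.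
- split; last by rewrite det_inv da invr1.
  move: (ea 0 0) (ea 0 1) (ea 1 0) (ea 1 1) => *.
  move: da; rewrite (mkE a) det_mk => da; rewrite invmx_mk //.
  apply: mk_all; zl_tac.
Qed.


Definition E12 (x : R) := mk 1 x 0 1.
Definition E21 (x : R) := mk 1 0 x 1.

Lemma E12_add x y : E12 x *m E12 y = E12 (x + y).
Proof. rewrite /E12 mk_mul; apply: mk_eq; ring. Qed.

Lemma H5_one : H5 (mk 1 0 0 1).
Proof.
have -> : mk 1 0 0 1 = Smx R *m invmx (Smx R).
  rewrite Smx_mk invmx_mk; last ring.
  rewrite mk_mul; apply: mk_eq; ring.
by apply: H5_mul; [apply: H5_S | apply: H5_inv; apply: H5_S].
Qed.

Lemma H5_E12lam (k : int) : H5 (E12 (k%:~R * l)).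
Proof.
have hn : forall m : nat, H5 (E12 (m%:R * l)).
  elim => [|m IH]; first by rewrite mul0r /E12; apply: H5_one.
  have -> : E12 (m.+1%:R * l) = E12 (m%:R * l) *m Tmx R.
    by rewrite Tmx_mk /E12 mk_mul; apply: mk_eq; rewrite ?mulrS; ring.
  by apply: H5_mul => //; apply: H5_T.
case: k => m.
  by have := hn m.
have -> : E12 ((Negz m)%:~R * l) = invmx (E12 (m.+1%:R * l)).
  rewrite /E12 invmx_mk; last ring.
  by apply: mk_eq; rewrite ?NegzE ?rmorphN /=; ring.
by apply: H5_inv.
Qed.

Lemma lam_eq (P Q K : R) : P - Q = (l * l - l - 1) * K -> P = Q.
Proof. by rewrite lamrel mul0r => /eqP; rewrite subr_eq0 => /eqP. Qed.

Lemma det_eq (p q r s P Q K : R) : p * s - q * r = 1 ->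
  P - Q = (p * s - q * r - 1) * K -> P = Q.
Proof. by move=> ->; rewrite subrr mul0r => /eqP; rewrite subr_eq0 => /eqP. Qed.

Lemma conjE p q r s x : p * s - q * r = 1 ->
  mk p q r s *m E12 x *m mk s (-q) (-r) p =
  mk (1 - x * p * r) (x * p * p) (- (x * r * r)) (1 + x * p * r).
Proof.
move=> h; rewrite /E12 !mk_mul; apply: mk_eq.
- by apply: (@det_eq p q r s _ _ 1) => //; ring.
- by ring.
- by ring.
- by apply: (@det_eq p q r s _ _ 1) => //; ring.
Qed.

Lemma H5_X : H5 (mk (2 * l) (1 + 2 * l) (-1 - 2 * l) (-2 - 2 * l)).
Proof.
have -> : mk (2 * l) (1 + 2 * l) (-1 - 2 * l) (-2 - 2 * l) =
   Smx R *m Tmx R *m Smx R *m Tmx R *m Tmx R *m Smx R *m Tmx R.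
  rewrite Smx_mk Tmx_mk !mk_mul; apply: mk_eq.
  - by apply: (@lam_eq _ _ 0); ring.
  - by apply: (@lam_eq _ _ (-2)); ring.
  - by apply: (@lam_eq _ _ 2); ring.
  - by apply: (@lam_eq _ _ (2 + 2 * l)); ring.
by repeat apply: H5_mul; (apply: H5_S || apply: H5_T).
Qed.

Lemma H5_E21 (k : int) : H5 (E21 (- (k%:~R * l))).
Proof.
have -> : E21 (- (k%:~R * l)) = invmx (Smx R) *m E12 (k%:~R * l) *m Smx R.
  rewrite Smx_mk invmx_mk; last ring.
  rewrite /E21 /E12 !mk_mul; apply: mk_eq; ring.
apply: H5_mul; last exact: H5_S.
by apply: H5_mul; [apply: H5_inv; apply: H5_S | apply: H5_E12lam].
Qed.

Definition zl (a b : int) : R := a%:~R + b%:~R * l.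

Lemma zl_mul a b c d : zl a b * zl c d = zl (a * c + b * d) (a * d + b * c + b * d).
Proof.
rewrite /zl !rmorphD !rmorphM /=.
apply: (@lam_eq _ _ (b%:~R * d%:~R)); ring.
Qed.

Lemma zl_sub a b c d : zl a b - zl c d = zl (a - c) (b - d).
Proof. by rewrite /zl !rmorphB /=; ring. Qed.

Lemma zl_opp a b : - zl a b = zl (- a) (- b).
Proof. by rewrite /zl !rmorphN /=; ring. Qed.

Lemma zl_in a b : inZl (zl a b). Proof. by exists a, b. Qed.

Lemma Nz_opp a b : Nz (- a) (- b) = Nz a b.
Proof. by rewrite /Nz; ring. Qed.

Lemma zl_add a b c d : zl a b + zl c d = zl (a + c) (b + d).
Proof. by rewrite /zl !rmorphD /=; ring. Qed.

Definition toM (X : M4) : 'M[R]_2 := let: (a, b, c, d) := X in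
  mk (zl a.1 a.2) (zl b.1 b.2) (zl c.1 c.2) (zl d.1 d.2).

Lemma toM_mul X Y : toM (mm X Y) = toM X *m toM Y.
Proof.
case: X => [[[a b] c] d]; case: Y => [[[a' b'] c'] d'].
by rewrite /= mk_mul !zl_mul !zl_add.
Qed.

Lemma toM_inv X : \det (toM X) = 1 -> invmx (toM X) = toM (madj X).
Proof.
case: X => [[[a b] c] d] /=; rewrite det_mk => h.
by rewrite invmx_mk // !zl_opp.
Qed.

Lemma zl10 : zl 1 0 = 1. Proof. by rewrite /zl mul0r addr0. Qed.
Lemma zl00 : zl 0 0 = 0. Proof. by rewrite /zl mul0r addr0. Qed.
Lemma zlm10 : zl (-1) 0 = -1. Proof. by rewrite /zl mul0r addr0. Qed.
Lemma zl01 : zl 0 1 = l. Proof. by rewrite /zl mul1r add0r. Qed.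

Lemma toM_S : toM S4 = Smx R.
Proof. by rewrite Smx_mk /= zl10 zl00 zlm10. Qed.
Lemma toM_T : toM T4 = Tmx R.
Proof. by rewrite Tmx_mk /= zl10 zl00 zl01. Qed.
Lemma toM_E : toM E4 = E12 1.
Proof. by rewrite /E12 /= zl10 zl00. Qed.

Lemma H5_inv_mod (p : int) D (hc : checkD p D) h : H5 h ->
  exists X d, [/\ h = toM X, cM p X d & d \in D].
Proof.
case: hc => c1 c2 c3 c4 _.
rewrite /ck1 /ck2 /ck3 /ck4 in c1 c2 c3 c4.
elim => [||a b ha [X1 [d1 [e1 m1 i1]]] hb [X2 [d2 [e2 m2 i2]]]|a ha [X1 [d1 [e1 m1 i1]]]].
- exists S4, (rM p S4); rewrite toM_S; split; [by [] | exact: cM_r | exact: c3].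
- exists T4, (rM p T4); rewrite toM_T; split; [by [] | exact: cM_r | exact: c4].
- exists (mm X1 X2), (rM p (mm d1 d2)); split.
  + by rewrite toM_mul e1 e2.
  + exact: (cM_trans (cM_mm m1 m2) (cM_r _ _)).
  + by move/allP: c1 => /(_ _ i1) /allP /(_ _ i2) H; exact: H.
- exists (madj X1), (rM p (madj d1)); split.
  + have [_ dh] := H5_prop a ha; rewrite e1 in dh *; exact: toM_inv.
  + exact: (cM_trans (cM_adj m1) (cM_r _ _)).
  + by move/allP: c2 => /(_ _ i1) H; exact: H.
Qed.

Section Ideal.
Variable A : R -> Prop.
Hypothesis hA : is_ideal A.

Lemma A_inZl {x} : A x -> inZl x. Proof. by move=> hx; case: hA => h _ _ _ _; exact: h. Qed.
Lemma A_0 : A 0. Proof. by case: hA => _ h _ _ _. Qed.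
Lemma A_add {x y} : A x -> A y -> A (x + y). Proof. by move=> hx hy; case: hA => _ _ h _ _; exact: h. Qed.
Lemma A_opp {x} : A x -> A (- x). Proof. by move=> hx; case: hA => _ _ _ h _; exact: h. Qed.
Lemma A_sub {x y} : A x -> A y -> A (x - y). Proof. by move=> hx hy; exact: (A_add hx (A_opp hy)). Qed.
Lemma A_mul {r x} : inZl r -> A x -> A (r * x). Proof. by move=> hr hx; case: hA => _ _ _ _ h; exact: h. Qed.
Lemma A_mulr {r x} : inZl r -> A x -> A (x * r). Proof. by move=> hr hx; rewrite mulrC; exact: (A_mul hr hx). Qed.
Lemma A_eq {x y : R} : A x -> x = y -> A y. Proof. by move=> h <-. Qed.

Lemma A_sum k (F : 'I_k -> R) : (forall i, A (F i)) -> A (\sum_i F i).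
Proof.
move=> h; apply: (big_ind A) => //; [exact: A_0 | move=> ? ?; exact: A_add].
Qed.

Definition Reach (M : 'M[R]_2) := exists2 h, H5 h & forall i j, A (h i j - M i j).

Lemma reach_congr (M M' : 'M[R]_2) : Reach M -> (forall i j, A (M i j - M' i j)) -> Reach M'.
Proof.
move=> [h hh e] e'; exists h => // i j.
by apply: (A_eq (A_add (e i j) (e' i j))); ring.
Qed.

Lemma reach_H5 (h : 'M[R]_2) : H5 h -> Reach h.
Proof. by move=> hh; exists h => // i j; rewrite subrr; apply: A_0. Qed.

Lemma reach_mul (M N : 'M[R]_2) : (forall i j, inZl (M i j)) -> Reach M -> Reach N -> Reach (M *m N).
Proof.
move=> hM [h hh e] [h' hh' e']; exists (h *m h'); first exact: H5_mul.
move=> i j.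
have [eh' _] := H5_prop h' hh'.
have -> : (h *m h') i j - (M *m N) i j =
  \sum_k ((h i k - M i k) * h' k j + M i k * (h' k j - N k j)).
  by rewrite !mxE -sumrB; apply: eq_bigr => k _; ring.
apply: A_sum => k; exact: (A_add (A_mulr (eh' k j) (e i k)) (A_mul (hM i k) (e' k j))).
Qed.

Lemma reach_adj a b c d : Reach (mk a b c d) -> Reach (mk d (-b) (-c) a).
Proof.
move=> [h hh e]; exists (invmx h); first exact: H5_inv.
have [_ dh] := H5_prop h hh.
move: dh e; rewrite (mkE h) det_mk => dh e.
rewrite invmx_mk //.
have e00 := e 0 0; have e01 := e 0 1; have e10 := e 1 0; have e11 := e 1 1.
rewrite !mk00 !mk01 !mk10 !mk11 in e00 e01 e10 e11.
apply: (@mk_diff A) => //.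
- by apply: (A_eq (A_opp e01)); ring.
- by apply: (A_eq (A_opp e10)); ring.
Qed.

Lemma reach_E12_1 (u v : int) : A (2 * u%:~R - 1) -> A (3 * v%:~R - 1) -> Reach (E12 1).
Proof.
move=> hu hv.
set U := (u%:~R : R) in hu *; set V := (v%:~R : R) in hv *.
set z := - (U * l).
set p := 2 * l + (1 + 2 * l) * z.
set q := 1 + 2 * l.
set r := (-1 - 2 * l) + (-2 - 2 * l) * z.
set s := -2 - 2 * l.
have hY : H5 (mk p q r s).
  have -> : mk p q r s = mk (2 * l) (1 + 2 * l) (-1 - 2 * l) (-2 - 2 * l) *m E21 z.
    by rewrite /E21 mk_mul; apply: mk_eq; rewrite /p /q /r /s; ring.
  by apply: H5_mul; [apply: H5_X | apply: H5_E21].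
have [_ dY] := H5_prop _ hY; rewrite det_mk in dY.
set x := ((-4 * v)%:~R * l).
set w := ((2 * v)%:~R * l).
have hG : H5 (mk p q r s *m E12 x *m invmx (mk p q r s) *m E12 w).
  apply: H5_mul; last exact: H5_E12lam.
  apply: H5_mul; last by apply: H5_inv.
  by apply: H5_mul => //; apply: H5_E12lam.
rewrite invmx_mk // conjE // /E12 mk_mul in hG.
have Ar : A r.
  have -> : r = (2 * l + 1) * (2 * U - 1) + (l * l - l - 1) * (2 * U).
    by rewrite /r /z; ring.
  rewrite lamrel mul0r addr0; apply: A_mul => //; zl_tac.
set t := 2 * p - l + 2.
have At : A t.
  have -> : t = - (3 * l + 2) * (2 * U - 1) - (l * l - l - 1) * (4 * U).
    by rewrite /t /p /z; ring.
  rewrite lamrel mul0r subr0; apply: A_mul => //; zl_tac.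
have hx : x = -4 * l * V by rewrite /x /V rmorphM /=; ring.
have hw : w = 2 * l * V by rewrite /w /V rmorphM /=; ring.
have Ak : A (x * p * p + w - 1).
  have -> : x * p * p + w - 1 = (3 * V - 1) + (l * l - l - 1) * (V * (3 - l))
             - l * V * t * (2 * l - 4 + t).
    by rewrite hx hw /t; ring.
  rewrite lamrel mul0r addr0.
  apply: A_sub => //.
  have hVZ : inZl V by apply: inZl_int.
  have htZ : inZl t by apply: A_inZl.
  apply: (A_eq (A_mul (r := l * V * (2 * l - 4 + t)) _ At)); [zl_tac | ring].
have hUZ : inZl U by apply: inZl_int.
have hzZ : inZl z by rewrite /z; zl_tac.
have hpZ : inZl p by rewrite /p; zl_tac.
have hxZ : inZl x by rewrite /x; zl_tac.
have hwZ : inZl w by rewrite /w; zl_tac.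
apply: (reach_congr _ _ (reach_H5 _ hG)); rewrite /E12; apply: (@mk_diff A).
- apply: (A_eq (A_mul (r := - (x * p)) _ Ar)); [zl_tac | ring].
- apply: (A_eq (A_add (A_mul (r := - (x * p * w)) _ Ar) Ak)); [zl_tac | ring].
- apply: (A_eq (A_mul (r := - (x * r)) _ Ar)); [zl_tac; exact: A_inZl | ring].
- apply: (A_eq (A_mul (r := - (x * r * w) + x * p) _ Ar)); [zl_tac; exact: A_inZl | ring].
Qed.

Lemma reach_E12_int (hE : Reach (E12 1)) (k : int) : Reach (E12 k%:~R).
Proof.
have hn : forall m : nat, Reach (E12 m%:R).
  elim => [|m IH]; first by apply: reach_H5; apply: H5_one.
  have -> : E12 m.+1%:R = E12 m%:R *m E12 1 by rewrite E12_add mulrS addrC.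
  apply: reach_mul => //; rewrite /E12; apply: mk_all; zl_tac.
case: k => m; first exact: hn.
have := reach_adj _ _ _ _ (hn m.+1).
by rewrite oppr0 NegzE rmorphN /=.
Qed.

Lemma reach_E12 (hE : Reach (E12 1)) x : inZl x -> Reach (E12 x).
Proof.
move=> [a [b ->]].
rewrite -E12_add; apply: reach_mul.
- rewrite /E12; apply: mk_all; zl_tac.
- exact: reach_E12_int.
- by apply: reach_H5; apply: H5_E12lam.
Qed.

Lemma reach_Sinv : Reach (mk 0 (-1) 1 0).
Proof.
apply: reach_H5.
have -> : mk 0 (-1) 1 0 = invmx (Smx R) by rewrite Smx_mk invmx_mk; [apply: mk_eq; ring | ring].
by apply: H5_inv; apply: H5_S.
Qed.

Lemma reach_S : Reach (mk 0 1 (-1) 0).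
Proof. by rewrite -Smx_mk; apply: reach_H5; apply: H5_S. Qed.

Lemma reach_E21 (hE : Reach (E12 1)) y : inZl y -> Reach (E21 y).
Proof.
move=> hy.
have -> : E21 y = mk 0 (-1) 1 0 *m E12 (- y) *m mk 0 1 (-1) 0.
  by rewrite /E21 /E12 !mk_mul; apply: mk_eq; ring.
apply: reach_mul; last exact: reach_S.
- rewrite /E12 mk_mul; apply: mk_all; zl_tac.
apply: reach_mul; first by apply: mk_all; zl_tac.
  exact: reach_Sinv.
by apply: reach_E12 => //; zl_tac.
Qed.

Lemma reach_diag (hE : Reach (E12 1)) a d : inZl a -> inZl d -> A (a * d - 1) ->
  Reach (mk a 0 0 d).
Proof.
move=> ha hd h.
have hr : Reach (E12 a *m E21 (- d) *m E12 a *m mk 0 (-1) 1 0).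
  apply: reach_mul; last exact: reach_Sinv.
    rewrite /E12 /E21 !mk_mul; apply: mk_all; zl_tac.
  apply: reach_mul; last exact: reach_E12.
    rewrite /E12 /E21 !mk_mul; apply: mk_all; zl_tac.
  apply: reach_mul; first by rewrite /E12; apply: mk_all; zl_tac.
    exact: reach_E12.
  by apply: reach_E21 => //; zl_tac.
apply: (reach_congr _ _ hr); rewrite /E12 /E21 !mk_mul; apply: (@mk_diff A).
- by apply: (A_eq (A_mul (r := - a) _ h)); [zl_tac | ring].
- by apply: (A_eq (A_mul (r := 1) _ h)); [zl_tac | ring].
- by apply: (A_eq (A_mul (r := - 1) _ h)); [zl_tac | ring].
- by apply: (A_eq A_0); ring.
Qed.

Lemma reach_tri (hE : Reach (E12 1)) a b d : inZl a -> inZl b -> inZl d -> A (a * d - 1) ->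
  Reach (mk a b 0 d).
Proof.
move=> ha hb hd h.
have hr : Reach (mk a 0 0 d *m E12 (d * b)).
  apply: reach_mul; first by apply: mk_all; zl_tac.
    exact: reach_diag.
  by apply: reach_E12 => //; zl_tac.
apply: (reach_congr _ _ hr); rewrite /E12 !mk_mul; apply: (@mk_diff A).
- by apply: (A_eq A_0); ring.
- by apply: (A_eq (A_mul (r := b) _ h)); [zl_tac | ring].
- by apply: (A_eq A_0); ring.
- by apply: (A_eq A_0); ring.
Qed.

Lemma reach_all (hE : Reach (E12 1)) a b c d : inZl a -> inZl b -> inZl c -> inZl d ->
  A (a * d - b * c - 1) -> Reach (mk a b c d).
Proof.
move=> ha hb [c1 [c2 ->]] hd.
have main : forall k : nat, forall (a b d : R) (c1 c2 : int), (absz (Nz c1 c2) < k)%N ->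
   inZl a -> inZl b -> inZl d -> A (a * d - b * zl c1 c2 - 1) -> Reach (mk a b (zl c1 c2) d).
  elim => [//|k IH] {}a {}b {}d {}c1 {}c2 hk {}ha {}hb {}hd h.
  case: (boolP ((c1 == 0) && (c2 == 0))) => [/andP [/eqP e1 /eqP e2]|nz].
    have -> : zl c1 c2 = 0 by rewrite /zl e1 e2 !mul0r add0r.
    apply: reach_tri => //; apply: (A_eq h); rewrite /zl e1 e2; ring.
  have hN : Nz c1 c2 != 0.
    apply/negP => /eqP e; have [e1 e2] := norm0 _ _ e.
    by move: nz; rewrite e1 e2 eqxx.
  have [a1 [a2 ea]] := ha.
  have [q1 [q2 hq]] := euclid_step a1 a2 c1 c2 hN.
  set Q := zl q1 q2.
  set r1 := a1 - (q1 * c1 + q2 * c2) in hq.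
  set r2 := a2 - (q1 * c2 + q2 * c1 + q2 * c2) in hq.
  have er : a - Q * zl c1 c2 = zl r1 r2.
    by rewrite ea -/(zl a1 a2) /Q zl_mul zl_sub.
  have hQ : inZl Q by apply: zl_in.
  have hc : inZl (zl c1 c2) by apply: zl_in.
  have hM' : Reach (mk (zl c1 c2) d (zl (- r1) (- r2)) (- (b - Q * d))).
    apply: IH => //; try zl_tac.
    - rewrite Nz_opp; move: hq hk; lia.
    - by apply: (A_eq h); rewrite -zl_opp -er; ring.
  have -> : mk a b (zl c1 c2) d =
     E12 Q *m mk 0 (-1) 1 0 *m mk (zl c1 c2) d (zl (- r1) (- r2)) (- (b - Q * d)).
    rewrite /E12 !mk_mul -zl_opp -er; apply: mk_eq; ring.
  apply: reach_mul => //.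
    rewrite /E12 mk_mul; apply: mk_all; zl_tac.
  apply: reach_mul; first by apply: mk_all; zl_tac.
    by apply: reach_E12.
  exact: reach_Sinv.
exact: (main (absz (Nz c1 c2)).+1).
Qed.

Lemma A_symm {x y} : A (x - y) -> A (y - x).
Proof. by move=> h; apply: (A_eq (A_opp h)); ring. Qed.
Lemma A_trans {x y z} : A (x - y) -> A (y - z) -> A (x - z).
Proof. by move=> h1 h2; apply: (A_eq (A_add h1 h2)); ring. Qed.

Lemma zl_cp (p : int) x1 x2 e1 e2 :
  (forall a, A a -> exists c d, a = zl (p * c) (p * d)) ->
  A (zl x1 x2 - zl e1 e2) -> cp p (x1, x2) (e1, e2).
Proof.
move=> hsub h; have [c [d e]] := hsub _ h.
rewrite zl_sub in e; have [f1 f2] := indep2 _ _ _ _ e.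
by split; rewrite /cz /=; apply/dvdzP; [exists c | exists d]; rewrite mulrC.
Qed.

Lemma no_E12 (p : int) D (hc : checkD p D)
  (hsub : forall a, A a -> exists c d, a = zl (p * c) (p * d)) : ~ Reach (E12 1).
Proof.
move=> [h hh e].
have [_ _ _ _ [c5 c6]] := hc.
rewrite /ck5 /ck6 in c5 c6.
have [X [d [eX cX dD]]] := H5_inv_mod p D hc h hh.
have cXE : cM p X E4.
  move: e; rewrite eX -toM_E.
  case: X {eX cX} => [[[[a1 a2] [b1 b2]] [c1 c2]] [d1 d2]] /= e.
  have e00 := e 0 0; have e01 := e 0 1; have e10 := e 1 0; have e11 := e 1 1.
  rewrite !mk00 in e00; rewrite !mk01 in e01; rewrite !mk10 in e10; rewrite !mk11 in e11.
  by split; apply: zl_cp.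
have cdE : cM p d E4 := cM_trans (cM_sym cX) cXE.
have := cM_rE cdE.
move/allP: c5 => /(_ _ dD) /eqP ->.
move=> ed; move: c6; rewrite -ed.
by rewrite dD.
Qed.

Lemma A_absz (m : int) : A m%:~R -> A (absz m)%:R.
Proof.
case: m => k h; first exact: h.
by rewrite NegzE rmorphN /= in h; have := A_opp h; rewrite opprK.
Qed.

Lemma zl_norm x y : zl x y * zl (x + y) (- y) = (Nz x y)%:~R.
Proof.
rewrite /zl /Nz; apply: (@lam_eq _ _ (- (y%:~R * y%:~R))).
by rewrite !(rmorphD, rmorphN, rmorphB, rmorphM) /=; ring.
Qed.

Section Count.
Variables (n : nat) (s : seq R).
Hypothesis hrep : forall i, (i < n)%N -> inZl s`_i.
Hypothesis hdis : forall i j, (i < n)%N -> (j < n)%N -> i != j -> ~ congr_mod A s`_i s`_j.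
Hypothesis hcomp : forall x, inZl x -> exists2 i, (i < n)%N & congr_mod A x s`_i.

Lemma cls_ex : exists f : R -> nat, forall x, inZl x -> (f x < n)%N /\ A (x - s`_(f x)).
Proof.
have hc : forall x, exists i, inZl x -> (i < n)%N /\ A (x - s`_i).
  move=> x; case: (boolp.pselect (inZl x)) => hx.
    by have [i hi e] := hcomp x hx; exists i.
  by exists 0%N.
have [f hf] := boolp.choice hc.
by exists f.
Qed.

Lemma cls_uniq i j : (i < n)%N -> (j < n)%N -> A (s`_i - s`_j) -> i = j.
Proof.
move=> hi hj e; case: (eqVneq i j) => // ne.
by have := hdis i j hi hj ne.
Qed.

Lemma n_in_A : A n%:R.
Proof.
have [f hf] := cls_ex.
have hs : forall i : 'I_n, (f (s`_i + 1)%R < n)%N.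
  by move=> i; have [] := hf _ (inZl_add (hrep _ (ltn_ord i)) inZl_1).
pose sg (i : 'I_n) := Ordinal (hs i).
have sinj : injective sg.
  move=> i j /(congr1 val) /= e; apply: val_inj => /=.
  have [_ ai] := hf _ (inZl_add (hrep _ (ltn_ord i)) inZl_1).
  have [_ aj] := hf _ (inZl_add (hrep _ (ltn_ord j)) inZl_1).
  rewrite e in ai.
  apply: cls_uniq => //.
  by apply: (A_eq (A_trans ai (A_symm aj))); ring.
have e : \sum_(i < n) (s`_i + 1 - s`_(sg i)) = n%:R.
  rewrite sumrB big_split /= (reindex_inj (F := fun i : 'I_n => s`_i) sinj) /=.
  by rewrite sumr_const card_ord; ring.
rewrite -e; apply: A_sum => i.
by have [] := hf _ (inZl_add (hrep _ (ltn_ord i)) inZl_1).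
Qed.

Lemma n_dvd_nat (M : nat) : A M%:R -> (n %| M * M)%N.
Proof.
case: M => [|M']; first by rewrite muln0 dvdn0.
set M := M'.+1 => hM.
have Mpos : (0 < M)%N by [].
have [f hf] := cls_ex.
pose zp (p : 'I_M * 'I_M) : R := (p.1 : nat)%:R + (p.2 : nat)%:R * l.
have hzp : forall p, inZl (zp p) by move=> p; rewrite /zp; zl_tac.
have hg : forall p, (f (zp p) < n)%N by move=> p; have [] := hf _ (hzp p).
pose g p : 'I_n := Ordinal (hg p).
have clsEq : forall x y, inZl x -> inZl y -> (f x = f y <-> A (x - y)).
  move=> x y hx hy; have [hx1 hx2] := hf _ hx; have [hy1 hy2] := hf _ hy.
  split => [e|h].
    by rewrite e in hx2; apply: (A_trans hx2 (A_symm hy2)).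
  by apply: cls_uniq => //; apply: (A_trans (A_symm hx2) (A_trans h hy2)).
have fsk : forall k, (k < n)%N -> f s`_k = k.
  move=> k hk; have [h1 h2] := hf _ (hrep k hk).
  by apply: cls_uniq => //; apply: A_symm.
have hsum : forall k : 'I_n, (\sum_(p | g p == k) 1 = \sum_(p | g p == g (ord0, ord0)) 1)%N.
  move=> k.
  have [a [b ea]] := hrep k (ltn_ord k).
  pose a' := absz (a %% M%:Z)%Z; pose b' := absz (b %% M%:Z)%Z.
  have ea' : (a'%:Z = a %% M%:Z)%Z by rewrite /a' gez0_abs // modz_ge0.
  have eb' : (b'%:Z = b %% M%:Z)%Z by rewrite /b' gez0_abs // modz_ge0.
  have hi : forall i : nat, ((i + a') %% M < M)%N by move=> i; apply: ltn_pmod.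
  have hj : forall i : nat, ((i + b') %% M < M)%N by move=> i; apply: ltn_pmod.
  pose phi (p : 'I_M * 'I_M) : 'I_M * 'I_M :=
    (Ordinal (hi p.1), Ordinal (hj p.2)).
  have phi_inj : injective phi.
    move=> [i1 j1] [i2 j2] [] /= /eqP e1 /eqP e2.
    rewrite eqn_modDr !modn_small // in e1.
    rewrite eqn_modDr !modn_small // in e2.
    by congr (_, _); apply: val_inj; apply/eqP.
  have cong : forall p, A (zp (phi p) - (zp p + s`_k)).
    move=> [i j]; rewrite ea /zp /=.
    have da := divz_eq a M%:Z; have db := divz_eq b M%:Z.
    have di := divn_eq (i + a') M; have dj := divn_eq (j + b') M.
    set qa := (a %/ M%:Z)%Z in da; set qb := (b %/ M%:Z)%Z in db.
    set qi := ((i + a') %/ M)%N in di; set qj := ((j + b') %/ M)%N in dj.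
    have eR : zp (phi (i, j)) - (zp (i, j) + (a%:~R + b%:~R * l)) =
       M%:R * (- qi%:R - qa%:~R + (- qj%:R - qb%:~R) * l).
      have e1 : (((i + a') %% M)%N%:R : R) = i%:R + a'%:R - qi%:R * M%:R.
        by have := congr1 (fun x : nat => x%:R : R) di; rewrite /= !natrD natrM => ->; ring.
      have e2 : (((j + b') %% M)%N%:R : R) = j%:R + b'%:R - qj%:R * M%:R.
        by have := congr1 (fun x : nat => x%:R : R) dj; rewrite /= !natrD natrM => ->; ring.
      have e3 : (a%:~R : R) = qa%:~R * M%:R + a'%:R.
        by rewrite {1}da rmorphD rmorphM /= -ea' !pmulrn.
      have e4 : (b%:~R : R) = qb%:~R * M%:R + b'%:R.
        by rewrite {1}db rmorphD rmorphM /= -eb' !pmulrn.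
      rewrite /zp /= e1 e2 e3 e4; ring.
    rewrite eR; apply: A_mulr => //; zl_tac.
  rewrite (reindex_inj phi_inj); apply: eq_bigl => p.
  have zp0 : zp (ord0, ord0) = 0 by rewrite /zp /= mul0r addr0.
  apply/eqP/eqP => [e|e].
  - have e' : f (zp (phi p)) = f s`_k by rewrite fsk //; exact: (congr1 val e).
    have h1 := (clsEq _ _ (hzp _) (hrep k (ltn_ord k))).1 e'.
    have h2 : A (zp p) by apply: (A_eq (A_trans (A_symm (cong p)) h1)); ring.
    apply: val_inj => /=; apply/(clsEq _ _ (hzp _) (hzp _)).
    by rewrite zp0 subr0.
  - have h1 : A (zp p) by have := (clsEq _ _ (hzp _) (hzp _)).1 (congr1 val e); rewrite zp0 subr0.
    apply: val_inj => /=; rewrite -(fsk k (ltn_ord k)); apply/(clsEq _ _ (hzp _) (hrep k (ltn_ord k))).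
    by apply: (A_eq (A_add (cong p) h1)); ring.
have total : (M * M = \sum_(k < n) \sum_(p | g p == k) 1)%N.
  rewrite -(@partition_big _ _ _ _ _ _ predT g predT) //=.
  by rewrite sum1_card card_prod card_ord.
rewrite total (eq_bigr _ (fun k _ => hsum k)) sum_nat_const card_ord.
exact: dvdn_mulr.
Qed.

End Count.

End Ideal.
End M.

Lemma chk2 : checkD 2 (Dset 2).
Proof. by split; [| | | | split]; vm_compute; reflexivity. Qed.
Lemma chk3 : checkD 3 (Dset 3).
Proof. by split; [| | | | split]; vm_compute; reflexivity. Qed.

Lemma not_dvd (R : realType) (A : R -> Prop) (hA : is_ideal A) (n : nat) (s : seq R)
  (hrep : forall i, (i < n)%N -> inZl s`_i)
  (hdis : forall i j, (i < n)%N -> (j < n)%N -> i != j -> ~ congr_mod A s`_i s`_j)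
  (hcomp : forall x, inZl x -> exists2 i, (i < n)%N & congr_mod A x s`_i)
  (p : nat) (D : seq M4) : prime p -> (p = 2 \/ p = 3)%N -> checkD p%:Z D ->
  Reach R A (E12 R 1) -> ~~ (p %| n)%N.
Proof.
move=> pp hp hc hE; apply/negP => hpn.
apply: (no_E12 R A p%:Z D hc _ hE) => a ha.
have [x [y ea]] := A_inZl R A hA ha.
case: (boolp.pselect ((p%:Z %| x)%Z && (p%:Z %| y)%Z)) => [/andP [/dvdzP [c ec] /dvdzP [d ed]]|nd].
  by exists c, d; rewrite ea /zl ec ed ![_ * p%:Z]mulrC.
exfalso; apply: nd.
have hm : A (Nz x y)%:~R.
  rewrite -zl_norm; apply: A_mulr => //; first exact: zl_in.
  by rewrite /zl -ea.
have := n_dvd_nat R A hA n s hrep hdis hcomp (absz (Nz x y)) (A_absz R A hA _ hm).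
move=> hdv.
have hpm : (p %| absz (Nz x y))%N.
  have := dvdn_trans hpn hdv; rewrite Euclid_dvdM //; by case/orP.
have [hx hy] := Nz_div p%:Z x y (ltac:(case: hp => ->; [left|right]; by [])) hpm.
by rewrite hx hy.
Qed.

Theorem corollary6p1 (R : realType) (A : R -> Prop) (n : nat) :
  is_ideal A -> nonzero_ideal A -> abs_norm_is A n ->
  (reduction_surjective A <-> coprime n 6).
Proof.
move=> hA _ [s [_ hrep hdis hcomp]].
have hcop : coprime n 6 = ~~ (2 %| n)%N && ~~ (3 %| n)%N.
  by rewrite (_ : 6 = 2 * 3)%N // coprimeMr ![coprime n _]coprime_sym !prime_coprime.
split.
- move=> hsurj.
  have hE : Reach R A (E12 R 1).
    apply: hsurj.
    + rewrite /E12; apply: (mk_all R (@inZl R)); [exact: inZl_1 | exact: inZl_1 | exact: inZl_0 | exact: inZl_1].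
    + rewrite /congr_mod /E12 det_mk.
      have -> : 1 * 1 - 1 * 0 - 1 = 0 :> R by ring.
      exact: A_0 R A hA.
  rewrite hcop; apply/andP; split.
  + exact: (@not_dvd R A hA n s hrep hdis hcomp 2 (Dset 2) (isT : prime 2) (or_introl erefl) chk2 hE).
  + exact: (@not_dvd R A hA n s hrep hdis hcomp 3 (Dset 3) (isT : prime 3) (or_intror erefl) chk3 hE).
- rewrite hcop => /andP [h2 h3].
  have nA := n_in_A R A hA n s hrep hdis hcomp.
  have [u hu] : exists u : int, A (2 * u%:~R - 1).
    exists (n %/ 2).+1%:Z.
    have hn : n = (2 * (n %/ 2) + 1)%N by lia.
    apply: (A_eq R A nA); rewrite {1}hn natrD natrM /= mulrS; ring.
  have [v hv] : exists v : int, A (3 * v%:~R - 1).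
    have [hn|hn] : n = (3 * (n %/ 3) + 1)%N \/ n = (3 * (n %/ 3) + 2)%N by lia.
    + exists (- (n %/ 3)%:Z).
      apply: (A_eq R A (A_opp R A hA nA)); rewrite {1}hn natrD natrM rmorphN /=; ring.
    + exists (n %/ 3).+1%:Z.
      apply: (A_eq R A nA); rewrite {1}hn natrD natrM /= mulrS; ring.
  have hE := reach_E12_1 R A hA u v hu hv.
  move=> M hM hdet.
  rewrite /congr_mod {1}(mkE R M) det_mk in hdet.
  have := reach_all R A hA hE _ _ _ _ (hM 0 0) (hM 0 1) (hM 1 0) (hM 1 1) hdet.
  by rewrite -mkE.
Qed.
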